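(* Let $G$ be a finite graph with $n$ vertices such that $\mathrm{Aut}(G)$ is cyclic of order $t$, generated by $\pi$, and let $t=\prod_{i=1}^s p_i^{r_i}$ be the prime factorization of $t$ (distinct primes $p_i$, $r_i\ge1$). Let $P^*=\{\pi^{t/p_1},\pi^{t/p_2},\dots,\pi^{t/p_s}\}$. Then for every positive integer $k$, $$L(G,k)=\sum_{P\subseteq P^*}(-1)^{|P|}N_{\ge}(P).$$
   Context: A $k$-labeling of $G$ is a map $\phi:V(G)\to\{1,\dots,k\}$; an automorphism $\pi$ preserves $\phi$ if $\phi(\pi(v))=\phi(v)$ for all $v$; $\phi$ is distinguishing if only the identity preserves it; $L(G,k)$ is the number of distinguishing $k$-labelings. For $P\subseteq\mathrm{Aut}(G)$, $N_{\ge}(P)$ denotes the number of $k$-labelings of $G$ preserved by every automorphism in $P$ (so $N_{\ge}(\emptyset)=k^n$). *)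

(* Defs.v *)
From mathcomp Require Import all_boot all_order all_algebra all_fingroup.
Set Implicit Arguments. Unset Strict Implicit. Unset Printing Implicit Defensive.

Definition simple_graph (V : finType) (e : rel V) : Prop :=
  symmetric e /\ irreflexive e.

Definition autG (V : finType) (e : rel V) : {set {perm V}} :=
  [set p : {perm V} | [forall x, forall y, e (p x) (p y) == e x y]].

(* k-labelings are finite functions V -> 'I_k (labels {0..k-1} ~ {1..k}). *)
Definition preserves (V : finType) (k : nat) (p : {perm V}) (phi : {ffun V -> 'I_k}) : bool :=
  [forall v, phi (p v) == phi v].

Definition distinguishing (V : finType) (e : rel V) (k : nat) (phi : {ffun V -> 'I_k}) : bool :=
  [forall p in autG e, preserves p phi ==> (p == 1%g)].

Definition L (V : finType) (e : rel V) (k : nat) : nat :=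
  #|[set phi : {ffun V -> 'I_k} | distinguishing e phi]|.

Definition Nge (V : finType) (k : nat) (P : {set {perm V}}) : nat :=
  #|[set phi : {ffun V -> 'I_k} | [forall p in P, preserves p phi]]|.

Definition Pstar (V : finType) (pi : {perm V}) (t : nat) : {set {perm V}} :=
  [set x in [seq (pi ^+ (t %/ p))%g | p <- primes t]].

(* Main.v *)
Require Import Defs.
From mathcomp Require Import all_boot all_order all_algebra all_fingroup.
From mathcomp Require Import cyclic.
Import GRing.Theory.
Local Open Scope ring_scope.

Lemma alt_sum (I : finType) (T : {set I}) :
  \sum_(P in powerset T) (-1) ^+ #|P| = (T == set0)%:R :> int.
Proof.
have [->|/set0Pn [x xT]] := eqVneq T set0.
  by rewrite powerset0 big_set1 cards0 expr0.
set S := \sum_(P in _) _.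
pose f (P : {set I}) := if x \in P then P :\ x else x |: P.
have finv : involutive f.
  move=> P; rewrite /f; case: (boolP (x \in P)) => xP.
    by rewrite in_setD1 eqxx /= setD1K.
  by rewrite setU11 setU1K.
have fS : S = - S.
  rewrite {2}/S (reindex_inj (inv_inj finv)) /= -sumrN.
  apply: eq_big => P.
    rewrite !inE /f; case: (boolP (x \in P)) => xP.
      apply/idP/idP => H; first exact: subset_trans (subD1set _ _) H.
      by rewrite -(setD1K xP) subUset sub1set xT.

    by rewrite subUset sub1set xT.
  move=> _; rewrite /f; case: (boolP (x \in P)) => xP.
    by rewrite [in LHS](cardsD1 x P) xP add1n exprS mulN1r.
  by rewrite cardsU1 xP add1n exprS mulN1r opprK.
have : 2%:R * S = 0 by rewrite mulr2n mulrDl mul1r {2}fS subrr.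
by move/eqP; rewrite mulf_eq0 => /orP[/eqP /= |/eqP].
Qed.

Lemma card_int (X : finType) (B : pred X) :
  (#|[set x | B x]|)%:Z = \sum_x (B x)%:R.
Proof.
rewrite -natz -sumr_const big_mkcond /=; apply: eq_bigr => x _.
by rewrite inE; case: (B x).
Qed.

Lemma incl_excl (I X : finType) (S : {set I}) (A : I -> X -> bool) :
  (#|[set x | [forall i in S, ~~ A i x]]|)%:Z =
  \sum_(P in powerset S) (-1) ^+ #|P| * (#|[set x | [forall i in P, A i x]]|)%:Z.
Proof.
under [RHS]eq_bigr do rewrite card_int mulr_sumr.
rewrite exchange_big card_int /=; apply: eq_bigr => x _.
pose T := [set i in S | A i x].
transitivity (\sum_(P in powerset T) (-1) ^+ #|P| : int).
  rewrite alt_sum; have -> : [forall i in S, ~~ A i x] = (T == set0); last by [].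
  apply/idP/idP => [/forall_inP H|/eqP H].
    apply/eqP; apply/setP => i; rewrite !inE; apply/andP => -[/H /negbTE ->] //.
  apply/forall_inP => i iS; apply/negP => Ai; have := in_set0 i; by rewrite -H inE iS Ai.
rewrite big_mkcond [RHS]big_mkcond /=; apply: eq_bigr => P _.
rewrite !inE; case: (boolP (P \subset S)) => PS /=; last first.
  case: ifP => // PT; case/negP: PS; apply: subset_trans PT _.
  by apply/subsetP => i; rewrite inE => /andP[].
have -> : (P \subset T) = [forall i in P, A i x].
  apply/subsetP/forall_inP => H i iP; first by have := H i iP; rewrite inE => /andP[].
  by rewrite inE (subsetP PS) // H.
by case: ifP; rewrite ?mulr1 ?mulr0.
Qed.

Lemma preserves_expg (V : finType) (k : nat) (p : {perm V}) (phi : {ffun V -> 'I_k}) n :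
  preserves p phi -> preserves (p ^+ n)%g phi.
Proof.
move=> /forallP H; elim: n => [|n /forallP IH]; apply/forallP => v.
  by rewrite expg0 perm1.
by rewrite expgS permM (eqP (IH _)) (eqP (H _)).
Qed.

Lemma dist_char (V : finType) (e : rel V) (pi : {perm V}) (t : nat)
  (hcyc : autG e = <[pi]>%g) (ht : #[pi]%g = t) k (phi : {ffun V -> 'I_k}) :
  distinguishing e phi = [forall x in Pstar pi t, ~~ preserves x phi].
Proof.
have t0 : (0 < t)%N by rewrite -ht order_gt0.
rewrite /distinguishing hcyc; apply/idP/idP.
  move=> /forall_inP H; apply/forall_inP => x; rewrite inE => /mapP[q].
  rewrite mem_primes => /and3P[pq _ qt] ->; apply/negP => Pr.
  have /eqP x1 := implyP (H _ (mem_cycle _ _)) Pr.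
  have : (#[pi]%g %| t %/ q)%N by rewrite order_dvdn x1 eqxx.
  have q1 : (1 < q)%N by apply: prime_gt1.
  have tq0 : (0 < t %/ q)%N by rewrite divn_gt0 ?prime_gt0 // dvdn_leq.
  rewrite ht => /(dvdn_leq tq0); rewrite leqNgt ltn_Pdiv //.
move=> /forall_inP H; apply/forall_inP => p pG; apply/implyP => Pp.
apply/negPn/negP => p1.
have d1 : (1 < #[p]%g)%N by rewrite ltn_neqAle eq_sym order_eq1 p1 order_gt0.
set q := pdiv #[p]%g.
have pq : prime q by apply: pdiv_prime.
have qd : (q %| #[p]%g)%N by apply: pdiv_dvd.
have qt : (q %| t)%N by rewrite -ht; apply: dvdn_trans qd (order_dvdG pG).
set y := (p ^+ (#[p]%g %/ q))%g.
have Hy : <[y]>%G \in [set H : {group {perm V}} | H \subset <[p]>%g & #|H| == q].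
  by rewrite (cycle_sub_group qd) set11.
move: Hy; rewrite inE => /andP[yp yq].
have : <[y]>%G \in [set H : {group {perm V}} | H \subset <[pi]>%g & #|H| == q].
  rewrite inE yq andbT; apply: subset_trans yp _; by rewrite cycle_subG.
rewrite (cycle_sub_group (_ : q %| #[pi]%g)%N) ?ht // inE => /eqP yE.
have yE2 := congr1 val yE; rewrite /= in yE2.
have : (pi ^+ (t %/ q))%g \in <[y]>%g by rewrite yE2 -ht cycle_id.
case/cycleP => i Ei.
have Pin : (pi ^+ (t %/ q))%g \in Pstar pi t.
  rewrite inE; apply/mapP; exists q => //.
  by rewrite mem_primes pq qt -ht order_gt0.
have /negP := H _ Pin; apply.
by rewrite Ei !preserves_expg.
Qed.
Theorem theorem2 (V : finType) (e : rel V) (pi : {perm V}) (t : nat)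
  (hG : simple_graph e)
  (hcyc : autG e = <[pi]>%g)
  (ht : #[pi]%g = t) :
  forall k : nat, (0 < k)%N ->
    (L e k)%:Z = \sum_(P in powerset (Pstar pi t)) (-1) ^+ #|P| * (Nge k P)%:Z.

Proof.
move=> k _.
have -> : L e k = #|[set phi : {ffun V -> 'I_k} | [forall x in Pstar pi t, ~~ preserves x phi]]|.
  by rewrite /L; apply: eq_card => phi; rewrite !inE (dist_char _ _ _ _ hcyc ht).
rewrite (incl_excl _ _ (Pstar pi t) (fun p (phi : {ffun V -> 'I_k}) => preserves p phi)).
by [].

Qed.
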